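(* Let $|q|<1$ and $|qa|,|qk|<|z|$, with parameters such that no denominator in the definition of $f$ vanishes for either argument order. Then $f(a,k,z,q)=-f(k,a,z,q)$.
   Context: Notation: $(x;q)_n=(1-x)(1-xq)\cdots(1-xq^{n-1})$, $(x_1,\dots,x_m;q)_n=(x_1;q)_n\cdots(x_m;q)_n$. Define $$f(a,k,z,q):=\sum_{n=1}^{\infty}\frac{(q\sqrt{k},-q\sqrt{k},k,z,k/a;q)_{n}}{(\sqrt{k},-\sqrt{k},qk,qk/z,qa;q)_{n}(1-q^n)}\left(\frac{qa}{z}\right)^{n}.$$ *)

(* Defs.v *)
From Stdlib Require Import Reals Lra.
Open Scope R_scope.

Record Cplx := mkC { Re : R; Im : R }.

Definition C0 : Cplx := mkC 0 0.
Definition C1 : Cplx := mkC 1 0.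
Definition Cadd (x y : Cplx) : Cplx := mkC (Re x + Re y) (Im x + Im y).
Definition Copp (x : Cplx) : Cplx := mkC (- Re x) (- Im x).
Definition Csub (x y : Cplx) : Cplx := Cadd x (Copp y).
Definition Cmul (x y : Cplx) : Cplx :=
  mkC (Re x * Re y - Im x * Im y) (Re x * Im y + Im x * Re y).
Definition Cinv (x : Cplx) : Cplx :=
  let d := Re x * Re x + Im x * Im x in mkC (Re x / d) (- Im x / d).
Definition Cdiv (x y : Cplx) : Cplx := Cmul x (Cinv y).
Definition Cnorm (x : Cplx) : R := sqrt (Re x * Re x + Im x * Im x).
Fixpoint Cpow (x : Cplx) (n : nat) : Cplx :=
  match n with O => C1 | S m => Cmul x (Cpow x m) end.

Fixpoint qpoch (x q : Cplx) (n : nat) : Cplx :=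
  match n with
  | O => C1
  | S m => Cmul (qpoch x q m) (Csub C1 (Cmul x (Cpow q m)))
  end.

(* n-th summand of f(a,k,z,q), where s is a square root of k (s*s = k).
   The summand does not depend on the choice of the square root, since
   both s and -s occur symmetrically. *)
Definition f_num (a k z q s : Cplx) (n : nat) : Cplx :=
  Cmul (Cmul (Cmul (Cmul (qpoch (Cmul q s) q n) (qpoch (Copp (Cmul q s)) q n))
    (qpoch k q n)) (qpoch z q n)) (qpoch (Cdiv k a) q n).

Definition f_den (a k z q s : Cplx) (n : nat) : Cplx :=
  Cmul (Cmul (Cmul (Cmul (Cmul (qpoch s q n) (qpoch (Copp s) q n))
    (qpoch (Cmul q k) q n)) (qpoch (Cdiv (Cmul q k) z) q n))
    (qpoch (Cmul q a) q n)) (Csub C1 (Cpow q n)).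

Definition f_term (a k z q s : Cplx) (n : nat) : Cplx :=
  Cmul (Cdiv (f_num a k z q s n) (f_den a k z q s n))
       (Cpow (Cdiv (Cmul q a) z) n).

Fixpoint psum1 (u : nat -> Cplx) (N : nat) : Cplx :=
  match N with O => C0 | S M => Cadd (psum1 u M) (u (S M)) end.

Definition series1_cv (u : nat -> Cplx) (L : Cplx) : Prop :=
  forall eps : R, eps > 0 ->
    exists N : nat, forall M : nat, (M >= N)%nat -> Cnorm (Csub (psum1 u M) L) < eps.

Definition f_denoms_ok (a k z q s : Cplx) : Prop :=
  a <> C0 /\ z <> C0 /\
  forall n : nat, (1 <= n)%nat -> f_den a k z q s n <> C0.

(* Main.v *)
Require Import Defs.
From Stdlib Require Import Reals Lra Lia.
From Coquelicot Require Import Coquelicot.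
Open Scope C_scope.

Fixpoint P (x q : C) (n : nat) : C :=
  match n with O => 1 | S m => P x q m * (1 - x * q ^ m) end.

Definition A (a k z q : C) (n : nat) : C :=
  P z q n * P (k / a) q n * (q * a / z) ^ n / (P (q * k / z) q n * P (q * a) q n).

Definition t (a k z q : C) (n : nat) : C :=
  (1 - k * q ^ n * q ^ n) * A a k z q n / ((1 - k * q ^ n) * (1 - q ^ n)).

Definition Rc (a k z q : C) (N : nat) : C :=
  A a k z q N * (q * (z * q ^ N - 1) * (a - k * q ^ N) * (z - a * k * q * q * q ^ N)) /
   (z * (z - a * q) * (1 - k * q * q ^ N) * (1 - a * q * q ^ N) * (1 - k * q * q ^ N / z)).

Fixpoint psumC (u : nat -> C) (N : nat) : C :=
  match N with O => 0 | S M => psumC u M + u (S M) end.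

Record Cond (a k z q : C) : Prop := {
  c_a : a <> 0; c_q : q <> 0; c_z : z <> 0; c_q1 : (Cmod q < 1)%R;
  c_qa : (Cmod (q * a) < Cmod z)%R;
  c_kz : forall i, 1 - q * k / z * q ^ i <> 0;
  c_qa' : forall i, 1 - q * a * q ^ i <> 0;
  c_qk : forall i, 1 - q * k * q ^ i <> 0 }.

Lemma Cmult_neq_0_inv (x y : C) : x * y <> 0 -> x <> 0 /\ y <> 0.
Proof. intros H; split; intros E; apply H; rewrite E; ring. Qed.

Lemma P_add x q m n : P x q (m + n) = P x q m * P (x * q ^ m) q n.
Proof.
  induction n as [|n IH].
  - rewrite Nat.add_0_r; simpl; ring.
  - rewrite Nat.add_succ_r; simpl. rewrite IH, Cpow_add_r. ring.
Qed.

Lemma P_shift x q n : P (x * q) q n * (1 - x) = P x q n * (1 - x * q ^ n).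
Proof.
  induction n as [|n IH]; simpl. - ring.
  - replace (P (x * q) q n * (1 - x * q * q ^ n) * (1 - x))
      with ((P (x * q) q n * (1 - x)) * (1 - x * q * q ^ n)) by ring.
    rewrite IH. ring.
Qed.

Lemma P_nz x q n : (forall i, 1 - x * q ^ i <> 0) -> P x q n <> 0.
Proof.
  intros H; induction n as [|n IH]; simpl.
  - apply C1_nz.
  - apply Cmult_neq_0; auto.
Qed.

(* turning 1 - u/z*v <> 0 into z - u*v <> 0 style facts *)
Lemma nz_scale (e f c : C) : c <> 0 -> e = c * f -> f <> 0 -> e <> 0.
Proof. intros Hc He Hf. rewrite He. apply Cmult_neq_0; auto. Qed.

Lemma nz_from (e f c : C) : c <> 0 -> f = e / c -> f <> 0 -> e <> 0.
Proof. intros Hc He Hf E. apply Hf. rewrite He, E. unfold Cdiv. ring. Qed.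

Ltac nzdiv h c := match type of h with ?f <> _ =>
  apply (nz_from _ f c); [solve [auto | apply C1_nz] | solve [field; auto] | exact h] end.

Ltac nzauto z := match goal with
 | h : ?f <> _ |- _ <> _ => first [ nzdiv h (RtoC 1) | nzdiv h z ] end.

Lemma Cpow_lt1 (q : C) n : (Cmod q < 1)%R -> (Cmod (q ^ S n) < 1)%R.
Proof.
  intros H. rewrite Cmod_pow. pose proof (Cmod_ge_0 q).
  apply pow_lt_1_compat; [lra | lia].
Qed.

Lemma one_minus_pow_nz (q : C) n : (Cmod q < 1)%R -> 1 - q ^ S n <> 0.
Proof.
  intros H E. pose proof (Cpow_lt1 q n H) as H1.
  assert (q ^ S n = 1) by (apply Ceq_minus in E; auto).
  rewrite H0, Cmod_1 in H1. lra.
Qed.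

Open Scope C_scope.

Lemma A_S a k z q n (H : Cond a k z q) :
  A a k z q (S n) = A a k z q n * ((1 - z * q ^ n) * (1 - k / a * q ^ n) * (q * a / z)) /
    ((1 - q * k / z * q ^ n) * (1 - q * a * q ^ n)).
Proof.
  destruct H as [Ha Hq Hz _ _ Hkz Hqa Hqk].
  unfold A; simpl.
  assert (P (q * k / z) q n <> 0) by (apply P_nz; auto).
  assert (P (q * a) q n <> 0) by (apply P_nz; auto).
  specialize (Hkz n); specialize (Hqa n).
  field. repeat split; auto. nzdiv Hkz z.
Qed.

Lemma A_shift a k z q n (H : Cond a k z q) :
  A (a * q) (k * q) z q n = A a k z q n * q ^ n * (1 - q * k / z) * (1 - q * a) /
    ((1 - q * k / z * q ^ n) * (1 - q * a * q ^ n)).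
Proof.
  destruct H as [Ha Hq Hz _ _ Hkz Hqa Hqk].
  unfold A.
  replace (k * q / (a * q)) with (k / a) by (field; auto).
  replace (q * (k * q) / z) with ((q * k / z) * q) by (field; auto).
  replace (q * (a * q) / z) with ((q * a / z) * q) by (field; auto).
  replace (q * (a * q)) with ((q * a) * q) by ring.
  rewrite Cpow_mult_l.
  assert (N1 : 1 - q * k / z <> 0) by (specialize (Hkz 0%nat); simpl in Hkz; intro E; apply Hkz; rewrite <- E; ring).
  assert (N2 : 1 - q * a <> 0) by (specialize (Hqa 0%nat); simpl in Hqa; intro E; apply Hqa; rewrite <- E; ring).
  assert (N3 : z - q * k <> 0) by nzdiv N1 z.
  assert (E1 : P (q * k / z * q) q n = P (q * k / z) q n * (1 - q * k / z * q ^ n) / (1 - q * k / z)).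
  { rewrite <- P_shift. field. auto. }
  assert (E2 : P (q * a * q) q n = P (q * a) q n * (1 - q * a * q ^ n) / (1 - q * a)).
  { rewrite <- P_shift. field. auto. }
  rewrite E1, E2.
  assert (P (q * k / z) q n <> 0) by (apply P_nz; auto).
  assert (P (q * a) q n <> 0) by (apply P_nz; auto).
  specialize (Hkz n); specialize (Hqa n).
  field. repeat split; auto.
  all: try nzdiv Hkz z.

Qed.

Lemma Cond_nz1 a k z q (H : Cond a k z q) : z - a * q <> 0.
Proof.
  intro E. destruct H as [_ _ _ _ Hqa _ _ _].
  assert (z = q * a) by (apply Ceq_minus; rewrite <- E; ring).
  rewrite H in Hqa. lra.
Qed.

Lemma cert a k z q (H : Cond a k z q) (N : nat) :
  psumC (t a k z q) N - psumC (t (a * q) (k * q) z q) N = Rc a k z q N - Rc a k z q 0.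
Proof.
  induction N as [|N IH].
  - simpl. ring.
  - simpl psumC.
    replace (Rc a k z q (S N) - Rc a k z q 0) with
      ((Rc a k z q N - Rc a k z q 0) + (Rc a k z q (S N) - Rc a k z q N)) by ring.
    rewrite <- IH.
    assert (St : t a k z q (S N) - t (a * q) (k * q) z q (S N) = Rc a k z q (S N) - Rc a k z q N).
    2: { rewrite <- St. ring. }
    unfold t, Rc. rewrite (A_shift _ _ _ _ _ H). rewrite (A_S _ _ _ _ _ H).
    simpl Cpow.
    pose proof (Cond_nz1 _ _ _ _ H) as Nza.
    destruct H as [Ha Hq Hz Hq1 _ Hkz Hqa Hqk].
    pose proof (Hkz N) as K1. pose proof (Hkz (S N)) as K2.
    pose proof (Hqa N) as Q1. pose proof (Hqa (S N)) as Q2.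
    pose proof (Hqk N) as R1. pose proof (Hqk (S N)) as R2.
    simpl Cpow in K2, Q2, R2.
    assert (1 - q * q ^ N <> 0) by exact (one_minus_pow_nz q N Hq1).
    set (x := q ^ N) in *. set (Ax := A a k z q N).
    field. repeat split; auto; nzauto z.
Qed.

Lemma Cond_shift a k z q (H : Cond a k z q) : Cond (a * q) (k * q) z q.
Proof.
  destruct H as [Ha Hq Hz Hq1 Hqa Hkz Hqa' Hqk]. constructor; auto.
  - apply Cmult_neq_0; auto.
  - rewrite !Cmod_mult in *. pose proof (Cmod_ge_0 q). pose proof (Cmod_ge_0 a).
    assert (Cmod q * (Cmod a * Cmod q) <= Cmod q * Cmod a)%R.
    { rewrite <- Rmult_assoc. rewrite <- (Rmult_1_r (Cmod q * Cmod a)) at 2.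
      apply Rmult_le_compat_l; [apply Rmult_le_pos|]; lra. }
    lra.
  - intros i. replace (q * (k * q) / z * q ^ i) with (q * k / z * q ^ S i).
    apply Hkz. simpl. field. auto.
  - intros i. replace (q * (a * q) * q ^ i) with (q * a * q ^ S i).
    apply Hqa'. simpl. ring.
  - intros i. replace (q * (k * q) * q ^ i) with (q * k * q ^ S i).
    apply Hqk. simpl. ring.
Qed.

Lemma R0_antisym a k z q (H1 : Cond a k z q) (H2 : Cond k a z q) :
  Rc a k z q 0 + Rc k a z q 0 = 0.
Proof.
  pose proof (Cond_nz1 _ _ _ _ H1). pose proof (Cond_nz1 _ _ _ _ H2).
  destruct H1 as [Ha Hq Hz Hq1 _ Hkz Hqa Hqk].
  destruct H2 as [Hk _ _ _ _ Haz Hqk' Hqa'].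
  specialize (Hkz 0%nat); specialize (Hqa 0%nat); specialize (Hqk 0%nat); specialize (Haz 0%nat).
  simpl in *.
  unfold Rc, A. simpl.
  field. repeat split; auto; nzauto z.
Qed.

Close Scope C_scope.
Open Scope R_scope.

Definition cvC (u : nat -> C) (L : C) : Prop :=
  forall eps, eps > 0 -> exists N, forall M, (M >= N)%nat -> Cmod (psumC u M - L)%C < eps.

Lemma Cmod_le_sum (x : C) : Cmod x <= Rabs (fst x) + Rabs (snd x).
Proof.
  pose proof (Cmod2_alt x) as H. pose proof (Cmod_ge_0 x).
  pose proof (Rabs_pos (fst x)). pose proof (Rabs_pos (snd x)).
  assert (E1 : Complex.Re x ^ 2 = Rabs (fst x) ^ 2) by (rewrite <- pow2_abs; reflexivity).
  assert (E2 : Complex.Im x ^ 2 = Rabs (snd x) ^ 2) by (rewrite <- pow2_abs; reflexivity).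
  rewrite E1, E2 in H. nra.
Qed.

Lemma im_le_Cmod (x : C) : Rabs (Complex.Im x) <= Cmod x.
Proof.
  pose proof (Cmod2_alt x) as H. pose proof (Cmod_ge_0 x). pose proof (Rabs_pos (Complex.Im x)).
  assert (E2 : Complex.Im x ^ 2 = Rabs (Complex.Im x) ^ 2) by (rewrite <- pow2_abs; reflexivity).
  rewrite E2 in H. nra.
Qed.

Lemma zero_of_small (x : C) : (forall eps, eps > 0 -> Cmod x < eps) -> x = 0%C.
Proof.
  intros H. apply Cmod_eq_0. pose proof (Cmod_ge_0 x).
  destruct (Rle_lt_or_eq_dec 0 (Cmod x) H0) as [Hl|He]; auto.
  specialize (H (Cmod x) Hl). lra.
Qed.

Lemma Cmod_minus_sym (x y : C) : Cmod (x - y) = Cmod (y - x).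
Proof. replace (x - y)%C with (- (y - x))%C by ring. apply Cmod_opp. Qed.

Lemma Cmod_tri3 (x y : C) : Cmod (x - y) <= Cmod x + Cmod y.
Proof. unfold Cminus. eapply Rle_trans; [apply Cmod_triangle|]. rewrite Cmod_opp; lra. Qed.

Lemma cvC_unique u L1 L2 : cvC u L1 -> cvC u L2 -> L1 = L2.
Proof.
  intros H1 H2. apply Ceq_minus. apply zero_of_small. intros eps He.
  destruct (H1 (eps/2)) as [N1 HN1]; [lra|]. destruct (H2 (eps/2)) as [N2 HN2]; [lra|].
  specialize (HN1 (max N1 N2) ltac:(lia)). specialize (HN2 (max N1 N2) ltac:(lia)).
  replace (L1 - L2)%C with ((psumC u (max N1 N2) - L2) - (psumC u (max N1 N2) - L1))%C by ring.
  eapply Rle_lt_trans; [apply Cmod_tri3|]. lra.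
Qed.

Lemma cvC_bound u L b : cvC u L -> (forall n, Cmod (psumC u n) <= b) -> Cmod L <= b.
Proof.
  intros H Hb. apply Rnot_lt_le. intros Hlt.
  destruct (H (Cmod L - b)) as [N HN]; [lra|]. specialize (HN N (le_n N)). specialize (Hb N).
  replace L with (psumC u N - (psumC u N - L))%C in Hlt by ring.
  pose proof (Cmod_tri3 (psumC u N) (psumC u N - L)). 
  replace (psumC u N - (psumC u N - L))%C with L in * by ring. lra.
Qed.

Lemma psum_geom (u : nat -> C) B rho :
  0 <= B -> 0 <= rho < 1 -> (forall n, (1 <= n)%nat -> Cmod (u n) <= B * rho ^ n) ->
  forall n p, Cmod (psumC u (n + p) - psumC u n)%C <= B / (1 - rho) * (rho ^ (S n) - rho ^ (S (n + p))).
Proof.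
  intros HB Hr Hu n p. induction p as [|p IH].
  - rewrite Nat.add_0_r. replace (psumC u n - psumC u n)%C with (RtoC 0) by ring.
    rewrite Cmod_0. lra.
  - rewrite Nat.add_succ_r. simpl psumC.
    replace (psumC u (n + p)%nat + u (S (n + p)%nat) - psumC u n)%C with
      ((psumC u (n + p)%nat - psumC u n) + u (S (n + p)%nat))%C by ring.
    eapply Rle_trans; [apply Cmod_triangle|].
    specialize (Hu (S (n + p)) ltac:(lia)).
    assert (E : B * rho ^ S (n + p) = B / (1 - rho) * (rho ^ S (n + p) - rho ^ S (S (n + p)))).
    { simpl. field. lra. }
    assert (B / (1 - rho) * (rho ^ S n - rho ^ S (n + p)) + B / (1 - rho) * (rho ^ S (n + p) - rho ^ S (S (n + p)))
            = B / (1 - rho) * (rho ^ S n - rho ^ S (S (n + p)))) by ring.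
    lra.
Qed.

Lemma pow_tends0 (rho : R) : 0 <= rho < 1 -> forall eps, eps > 0 -> exists N, forall n, (n >= N)%nat -> rho ^ n < eps.
Proof.
  intros Hr eps He. destruct (pow_lt_1_zero rho ltac:(rewrite Rabs_right; lra) eps He) as [N HN].
  exists N. intros n Hn. specialize (HN n Hn). rewrite Rabs_right in HN; auto.
  apply Rle_ge, pow_le; lra.
Qed.

Lemma geom_cv (u : nat -> C) B rho :
  0 <= B -> 0 <= rho < 1 -> (forall n, (1 <= n)%nat -> Cmod (u n) <= B * rho ^ n) ->
  exists L, cvC u L /\ Cmod L <= B * rho / (1 - rho).
Proof.
  intros HB Hr Hu.
  assert (Hd : forall n m, (n <= m)%nat -> Cmod (psumC u m - psumC u n)%C <= B / (1 - rho) * rho ^ n).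
  { intros n m Hnm. replace m with (n + (m - n))%nat by lia.
    eapply Rle_trans; [apply (psum_geom u B rho HB Hr Hu)|].
    assert (0 <= B / (1 - rho)) by (apply Rdiv_le_0_compat; lra).
    pose proof (pow_le rho (S (n + (m - n))) ltac:(lra)).
    assert (rho ^ S n <= rho ^ n) by (simpl; rewrite <- (Rmult_1_l (rho ^ n)) at 2; apply Rmult_le_compat_r; [apply pow_le|]; lra).
    set (c := B / (1 - rho)) in *. nra. }
  assert (HC : forall eps, eps > 0 -> exists N, forall n m, (n >= N)%nat -> (m >= N)%nat ->
            Cmod (psumC u m - psumC u n)%C < eps).
  { intros eps He. destruct (pow_tends0 rho Hr (eps / (B / (1 - rho) + 1))) as [N HN].
    { apply Rdiv_lt_0_compat; auto. assert (0 <= B / (1 - rho)) by (apply Rdiv_le_0_compat; lra). lra. }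
    exists N. intros n m Hn Hm.
    assert (0 <= B / (1 - rho)) by (apply Rdiv_le_0_compat; lra).
    assert (Hgen : forall n m, (n >= N)%nat -> (n <= m)%nat -> Cmod (psumC u m - psumC u n)%C < eps).
    { intros n' m' Hn' Hnm'. eapply Rle_lt_trans; [apply Hd; auto|].
      specialize (HN n' Hn'). apply Rmult_lt_compat_r with (r := B / (1 - rho) + 1) in HN; [|lra].
      unfold Rdiv at 2 in HN. rewrite Rmult_assoc, Rinv_l in HN by lra.
      pose proof (pow_le rho n' ltac:(lra)). nra. }
    destruct (Nat.le_ge_cases n m).
    - apply Hgen; auto.
    - rewrite Cmod_minus_sym. apply Hgen; auto. }
  assert (Cre : Cauchy_crit (fun n => fst (psumC u n))).
  { intros eps He. destruct (HC eps He) as [N HN]. exists N. intros n m Hn Hm.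
    unfold Rdist. eapply Rle_lt_trans; [|apply (HN m n); auto].
    eapply Rle_trans; [|apply re_le_Cmod]. simpl. right. reflexivity. }
  assert (Cim : Cauchy_crit (fun n => snd (psumC u n))).
  { intros eps He. destruct (HC eps He) as [N HN]. exists N. intros n m Hn Hm.
    unfold Rdist. eapply Rle_lt_trans; [|apply (HN m n); auto].
    eapply Rle_trans; [|apply im_le_Cmod]. simpl. right. reflexivity. }
  destruct (Rcomplete.R_complete _ Cre) as [lr Hlr].
  destruct (Rcomplete.R_complete _ Cim) as [li Hli].
  assert (Hcv : cvC u (lr, li)).
  { intros eps He. destruct (Hlr (eps/2)) as [N1 H1]; [lra|]. destruct (Hli (eps/2)) as [N2 H2]; [lra|].
    exists (max N1 N2). intros M HM. eapply Rle_lt_trans; [apply Cmod_le_sum|].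
    specialize (H1 M ltac:(lia)). specialize (H2 M ltac:(lia)). unfold Rdist in *.
    assert (E1 : fst (psumC u M - (lr, li))%C = fst (psumC u M) - lr) by (simpl; ring).
    assert (E2 : snd (psumC u M - (lr, li))%C = snd (psumC u M) - li) by (simpl; ring).
    rewrite E1, E2. lra. }
  exists (lr, li). split; auto.
  assert (Hb : forall n, Cmod (psumC u n) <= B * rho / (1 - rho)).
  { intros n. pose proof (psum_geom u B rho HB Hr Hu 0 n) as H. simpl in H.
    replace (psumC u n - RtoC 0)%C with (psumC u n) in H by ring.
    assert (0 <= B / (1 - rho)) by (apply Rdiv_le_0_compat; lra).
    pose proof (pow_le rho n ltac:(lra)).
    replace (B * rho / (1 - rho)) with (B / (1 - rho) * rho) by (field; lra).
    set (c := B / (1 - rho)) in *. assert (0 <= c * (rho * rho ^ n)) by (apply Rmult_le_pos; [|apply Rmult_le_pos]; lra). lra. }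
  apply (cvC_bound u); auto.
Qed.

Close Scope C_scope.
Open Scope R_scope.

Lemma Cmod_1_minus_le (w : C) : Cmod (1 - w)%C <= 1 + Cmod w.
Proof. pose proof (Cmod_tri3 1 w). rewrite Cmod_1 in H. lra. Qed.

Lemma Cmod_1_minus_ge (w : C) : 1 - Cmod w <= Cmod (1 - w)%C.
Proof.
  pose proof (Cmod_triangle (1 - w)%C w). replace (1 - w + w)%C with (RtoC 1) in H by ring.
  rewrite Cmod_1 in H. lra.
Qed.

Lemma pow_le_1 r n : 0 <= r <= 1 -> r ^ n <= 1.
Proof.
  intros Hr. induction n as [|n IH]; simpl. lra.
  pose proof (pow_le r n ltac:(lra)). nra.
Qed.

Lemma exp_le_mono x y : x <= y -> exp x <= exp y.
Proof. intros [H|H]. left; apply exp_increasing; auto. right; subst; auto. Qed.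

Lemma P_upper0 x q n : Cmod q < 1 ->
  Cmod (P x q n) <= exp (Cmod x * (1 - Cmod q ^ n) / (1 - Cmod q)).
Proof.
  intros Hq. pose proof (Cmod_ge_0 q). pose proof (Cmod_ge_0 x).
  induction n as [|n IH]; simpl.
  - rewrite Cmod_1. replace (Cmod x * (1 - 1) / (1 - Cmod q)) with 0 by (field; lra).
    rewrite exp_0; lra.
  - rewrite Cmod_mult.
    replace (Cmod x * (1 - Cmod q * Cmod q ^ n) / (1 - Cmod q)) with
      (Cmod x * (1 - Cmod q ^ n) / (1 - Cmod q) + Cmod x * Cmod q ^ n) by (field; lra).
    rewrite exp_plus.
    pose proof (Cmod_1_minus_le (x * q ^ n)) as H1. rewrite Cmod_mult, Cmod_pow in H1.
    pose proof (exp_ineq1_le (Cmod x * Cmod q ^ n)).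
    pose proof (Cmod_ge_0 (P x q n)). pose proof (Cmod_ge_0 (1 - x * q ^ n)%C).
    apply Rmult_le_compat; auto. lra.
Qed.

Lemma P_upper x q n : Cmod q < 1 -> Cmod (P x q n) <= exp (Cmod x / (1 - Cmod q)).
Proof.
  intros Hq. eapply Rle_trans; [apply P_upper0; auto|]. apply exp_le_mono.
  pose proof (Cmod_ge_0 q). pose proof (Cmod_ge_0 x).
  pose proof (pow_le (Cmod q) n H).
  unfold Rdiv. apply Rmult_le_compat_r. left; apply Rinv_0_lt_compat; lra. nra.
Qed.

Lemma P_lower_small y q p : Cmod q < 1 -> Cmod y <= (1 - Cmod q) / 2 ->
  1 - Cmod y * (1 - Cmod q ^ p) / (1 - Cmod q) <= Cmod (P y q p).
Proof.
  intros Hq Hy. pose proof (Cmod_ge_0 q). pose proof (Cmod_ge_0 y).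
  induction p as [|p IH]; simpl.
  - rewrite Cmod_1. replace (Cmod y * (1 - 1) / (1 - Cmod q)) with 0 by (field; lra). lra.
  - rewrite Cmod_mult.
    pose proof (Cmod_1_minus_ge (y * q ^ p)) as H1. rewrite Cmod_mult, Cmod_pow in H1.
    pose proof (pow_le (Cmod q) p H).
    assert (Hrp : Cmod q ^ p <= 1) by (apply pow_le_1; lra).
    set (r := Cmod q) in *. set (s := Cmod y * (1 - r ^ p) / (1 - r)).
    assert (Hs : s <= 1/2).
    { unfold s. apply (Rmult_le_reg_r (1 - r)); [lra|]. unfold Rdiv. rewrite Rmult_assoc, Rinv_l by lra. nra. }
    assert (Hs0 : 0 <= s).
    { unfold s. apply Rdiv_le_0_compat; [|lra]. nra. }
    replace (Cmod y * (1 - r * r ^ p) / (1 - r)) with (s + Cmod y * r ^ p) by (unfold s; field; lra).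
    assert (0 <= 1 - Cmod y * r ^ p) by nra.
    pose proof (Cmod_ge_0 (P y q p)).
    assert ((1 - s) * (1 - Cmod y * r ^ p) <= Cmod (P y q p) * Cmod (1 - y * q ^ p)%C).
    { apply Rmult_le_compat; try lra. unfold s; lra. }
    assert (0 <= s * (Cmod y * r ^ p)) by (apply Rmult_le_pos; nra).
    nra.
Qed.

Lemma finite_min (f : nat -> R) : (forall n, 0 < f n) -> forall N, exists c, 0 < c /\ forall n, (n <= N)%nat -> c <= f n.
Proof.
  intros Hf N. induction N as [|N [c [Hc HN]]].
  - exists (f 0%nat). split; auto. intros n Hn. replace n with 0%nat by lia. lra.
  - exists (Rmin c (f (S N))). split. apply Rmin_glb_lt; auto.
    intros n Hn. destruct (Nat.eq_dec n (S N)) as [->|Hne].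
    + apply Rmin_r.
    + eapply Rle_trans; [apply Rmin_l|]. apply HN; lia.
Qed.

Lemma P_lower x q : Cmod q < 1 -> (forall i, (1 - x * q ^ i)%C <> 0%C) ->
  exists c, 0 < c /\ forall n, c <= Cmod (P x q n).
Proof.
  intros Hq Hx. pose proof (Cmod_ge_0 q). pose proof (Cmod_ge_0 x).
  destruct (pow_tends0 (Cmod q) ltac:(lra) ((1 - Cmod q) / (2 * (Cmod x + 1)))) as [i0 Hi0].
  { apply Rdiv_lt_0_compat; lra. }
  specialize (Hi0 i0 (le_n _)).
  assert (Hsmall : Cmod (x * q ^ i0)%C <= (1 - Cmod q) / 2).
  { rewrite Cmod_mult, Cmod_pow.
    apply Rmult_lt_compat_r with (r := 2 * (Cmod x + 1)) in Hi0; [|lra].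
    unfold Rdiv at 1 in Hi0. rewrite Rmult_assoc, Rinv_l in Hi0 by lra.
    pose proof (pow_le (Cmod q) i0 H). nra. }
  assert (Hhalf : forall p, 1/2 <= Cmod (P (x * q ^ i0) q p)).
  { intros p. eapply Rle_trans; [|apply P_lower_small; auto].
    pose proof (pow_le (Cmod q) p H). assert (Cmod q ^ p <= 1) by (apply pow_le_1; lra).
    pose proof (Cmod_ge_0 (x * q ^ i0)%C).
    assert (Cmod (x * q ^ i0)%C * (1 - Cmod q ^ p) / (1 - Cmod q) <= 1/2).
    { apply (Rmult_le_reg_r (1 - Cmod q)); [lra|]. unfold Rdiv. rewrite Rmult_assoc, Rinv_l by lra. nra. }
    lra. }
  assert (Hpos : forall n, 0 < Cmod (P x q n)) by (intros n; apply Cmod_gt_0, P_nz; auto).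
  destruct (finite_min _ Hpos i0) as [c [Hc Hcn]].
  exists (Rmin c (Cmod (P x q i0) / 2)). split.
  - apply Rmin_glb_lt; auto. specialize (Hpos i0). lra.
  - intros n. destruct (Nat.le_gt_cases n i0).
    + eapply Rle_trans; [apply Rmin_l|]. auto.
    + eapply Rle_trans; [apply Rmin_r|].
      replace n with (i0 + (n - i0))%nat by lia. rewrite P_add, Cmod_mult.
      specialize (Hhalf (n - i0)%nat). specialize (Hpos i0). nra.
Qed.

Lemma Pbounds x q : Cmod q < 1 -> (forall i, (1 - x * q ^ i)%C <> 0%C) ->
  exists c, 0 < c /\ (forall j, c <= Cmod (1 - x * q ^ j)%C) /\
    (forall m n, c <= Cmod (P (x * q ^ m) q n)).
Proof.
  intros Hq Hx. destruct (P_lower x q Hq Hx) as [c0 [Hc0 Hlow]].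
  set (E := exp (Cmod x / (1 - Cmod q))).
  assert (HE : 0 < E) by apply exp_pos.
  assert (Hup : forall n, Cmod (P x q n) <= E) by (intros; apply P_upper; auto).
  exists (c0 / E). split; [apply Rdiv_lt_0_compat; auto|]. split.
  - intros j. specialize (Hlow (S j)). simpl in Hlow. rewrite Cmod_mult in Hlow.
    pose proof (Hup j). pose proof (Cmod_ge_0 (1 - x * q ^ j)%C).
    apply (Rmult_le_reg_l E); auto. unfold Rdiv. rewrite <- Rmult_assoc, (Rmult_comm E c0), Rmult_assoc, Rinv_r by lra.
    pose proof (Cmod_ge_0 (P x q j)). nra.
  - intros m n. specialize (Hlow (m + n)%nat). rewrite P_add, Cmod_mult in Hlow.
    pose proof (Hup m). pose proof (Cmod_ge_0 (P (x * q ^ m) q n)).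
    apply (Rmult_le_reg_l E); auto. unfold Rdiv. rewrite <- Rmult_assoc, (Rmult_comm E c0), Rmult_assoc, Rinv_r by lra.
    pose proof (Cmod_ge_0 (P x q m)). nra.
Qed.

Close Scope C_scope.
Open Scope R_scope.

Lemma le_mult4 (x1 x2 x3 x4 b1 b2 b3 b4 : R) :
  0 <= x1 <= b1 -> 0 <= x2 <= b2 -> 0 <= x3 <= b3 -> 0 <= x4 <= b4 ->
  x1 * x2 * x3 * x4 <= b1 * b2 * b3 * b4.
Proof.
  intros. apply Rmult_le_compat; try apply Rmult_le_pos; try apply Rmult_le_pos; try lra.
  apply Rmult_le_compat; try apply Rmult_le_pos; try lra.
  apply Rmult_le_compat; lra.
Qed.

Lemma div_le_bound (x y X c : R) : 0 <= x <= X -> 0 < c <= y -> x / y <= X / c.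
Proof.
  intros Hx Hc. unfold Rdiv. apply Rmult_le_compat; try lra.
  left; apply Rinv_0_lt_compat; lra. apply Rinv_le_contravar; lra.
Qed.

Lemma pow_le_self r n : 0 <= r <= 1 -> (1 <= n)%nat -> r ^ n <= r.
Proof.
  intros Hr Hn. destruct n as [|n]; [lia|]. simpl.
  pose proof (pow_le_1 r n Hr). pose proof (pow_le r n ltac:(lra)). nra.
Qed.

Definition rho (a z q : C) : R := Cmod (q * a)%C / Cmod z.

Lemma rho_bounds a k z q : Cond a k z q -> 0 <= rho a z q < 1.
Proof.
  intros H. destruct H as [_ _ Hz _ Hqa _ _ _]. unfold rho.
  pose proof (Cmod_gt_0 z) as [Hz' _]. specialize (Hz' Hz).
  split. apply Rdiv_le_0_compat; auto; apply Cmod_ge_0.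
  apply (Rmult_lt_reg_r (Cmod z)); auto. unfold Rdiv. rewrite Rmult_assoc, Rinv_l by lra. lra.
Qed.

Lemma A_bound a k z q (H : Cond a k z q) :
  exists K, 0 <= K /\ forall m n,
    Cmod (A (a * q ^ m) (k * q ^ m) z q n) <= K * (rho a z q * Cmod q ^ m) ^ n.
Proof.
  pose proof H as [Ha Hq Hz Hq1 Hqa Hkz Hqa' Hqk].
  destruct (Pbounds _ _ Hq1 Hkz) as [c1 [Hc1 [_ Hc1']]].
  destruct (Pbounds _ _ Hq1 Hqa') as [c2 [Hc2 [_ Hc2']]].
  set (Ez := exp (Cmod z / (1 - Cmod q))). set (Eka := exp (Cmod (k / a)%C / (1 - Cmod q))).
  exists (Ez * Eka / (c1 * c2)). split.
  { apply Rdiv_le_0_compat. apply Rmult_le_pos; left; apply exp_pos. apply Rmult_lt_0_compat; auto. }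
  intros m n. unfold A.
  assert (Hqm : (q ^ m)%C <> 0%C) by (apply Cpow_nz; auto).
  replace (k * q ^ m / (a * q ^ m))%C with (k / a)%C by (field; auto).
  replace (q * (k * q ^ m) / z)%C with (q * k / z * q ^ m)%C by (field; auto).
  replace (q * (a * q ^ m) / z)%C with (q * a / z * q ^ m)%C by (field; auto).
  replace (q * (a * q ^ m))%C with (q * a * q ^ m)%C by ring.
  assert (D1 : P (q * k / z * q ^ m) q n <> 0%C).
  { apply P_nz. intros i. replace (q * k / z * q ^ m * q ^ i)%C with (q * k / z * q ^ (m + i))%C.
    apply Hkz. rewrite Cpow_add_r; ring. }
  assert (D2 : P (q * a * q ^ m) q n <> 0%C).
  { apply P_nz. intros i. replace (q * a * q ^ m * q ^ i)%C with (q * a * q ^ (m + i))%C.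
    apply Hqa'. rewrite Cpow_add_r; ring. }
  rewrite (Cmod_div _ _ (Cmult_neq_0 _ _ D1 D2)).
  rewrite !Cmod_mult, !Cmod_pow, !Cmod_mult, Cmod_div by auto.
  replace (Cmod (q * a)%C / Cmod z * Cmod (q ^ m)%C) with (rho a z q * Cmod q ^ m)
    by (unfold rho; rewrite Cmod_pow; reflexivity).
  assert (HW : 0 <= (rho a z q * Cmod q ^ m) ^ n).
  { apply pow_le. apply Rmult_le_pos. unfold rho. apply Rdiv_le_0_compat; [apply Cmod_ge_0|apply Cmod_gt_0; auto].
    apply pow_le, Cmod_ge_0. }
  set (W := (rho a z q * Cmod q ^ m) ^ n) in *.
  apply Rle_trans with (Ez * Eka * W / (c1 * c2)); [| right; field; lra].
  apply div_le_bound.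
  - pose proof (Cmod_ge_0 (P z q n)). pose proof (Cmod_ge_0 (P (k / a) q n)).
    pose proof (P_upper z q n Hq1). pose proof (P_upper (k / a)%C q n Hq1).
    fold Ez Eka in H1, H2.
    split. apply Rmult_le_pos; [apply Rmult_le_pos|]; auto.
    apply Rmult_le_compat_r; auto. apply Rmult_le_compat; auto.
  - specialize (Hc1' m n). specialize (Hc2' m n). split. apply Rmult_lt_0_compat; auto.
    apply Rmult_le_compat; lra.
Qed.

Lemma t_bound a k z q (H : Cond a k z q) :
  exists B, 0 <= B /\ forall m n, (1 <= n)%nat ->
    Cmod (t (a * q ^ m) (k * q ^ m) z q n) <= B * Cmod q ^ m * rho a z q ^ n.
Proof.
  destruct (A_bound a k z q H) as [K [HK HA]].
  pose proof (rho_bounds a k z q H) as Hrho.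
  pose proof H as [Ha Hq Hz Hq1 Hqa Hkz Hqa' Hqk].
  destruct (Pbounds _ _ Hq1 Hqk) as [c3 [Hc3 [Hc3' _]]].
  pose proof (Cmod_ge_0 q) as Hr0. pose proof (Cmod_ge_0 k) as Hk0.
  exists ((1 + Cmod k) * K / (c3 * (1 - Cmod q))). split.
  { apply Rdiv_le_0_compat. apply Rmult_le_pos; lra. apply Rmult_lt_0_compat; lra. }
  intros m n Hn. destruct n as [|n']; [lia|].
  unfold t.
  assert (E1 : (k * q ^ m * q ^ S n')%C = (q * k * q ^ (m + n'))%C) by (rewrite Cpow_add_r; simpl; ring).
  rewrite E1.
  assert (N1 : (1 - q * k * q ^ (m + n'))%C <> 0%C).
  { intro E. specialize (Hc3' (m + n')%nat). rewrite E, Cmod_0 in Hc3'. lra. }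
  assert (N2 : (1 - q ^ S n')%C <> 0%C) by (apply one_minus_pow_nz; auto).
  rewrite Cmod_div by (apply Cmult_neq_0; auto).
  rewrite !Cmod_mult.
  set (r := Cmod q) in *.
  assert (Hnum : Cmod (1 - q * k * q ^ (m + n') * q ^ S n')%C <= 1 + Cmod k).
  { eapply Rle_trans; [apply Cmod_1_minus_le|]. rewrite !Cmod_mult, !Cmod_pow. fold r.
    assert (r ^ (m + n') <= 1) by (apply pow_le_1; lra). assert (r ^ S n' <= 1) by (apply pow_le_1; lra).
    pose proof (pow_le r (m + n') Hr0). pose proof (pow_le r (S n') Hr0).
    assert (r ^ (m + n') * r ^ S n' <= 1) by nra.
    assert (0 <= r ^ (m + n') * r ^ S n') by nra.
    assert (r * (r ^ (m + n') * r ^ S n') <= 1) by nra.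
    assert (0 <= r * (r ^ (m + n') * r ^ S n')) by nra.
    replace (r * Cmod k * r ^ (m + n') * r ^ S n') with (Cmod k * (r * (r ^ (m + n') * r ^ S n'))) by ring.
    nra. }
  assert (Hden : 1 - r <= Cmod (1 - q ^ S n')%C).
  { eapply Rle_trans; [|apply Cmod_1_minus_ge]. rewrite Cmod_pow. fold r.
    pose proof (pow_le_self r (S n') ltac:(lra) ltac:(lia)). lra. }
  specialize (Hc3' (m + n')%nat).
  assert (HAb : Cmod (A (a * q ^ m) (k * q ^ m) z q (S n')) <= K * r ^ m * rho a z q ^ S n').
  { eapply Rle_trans; [apply HA|]. fold r. rewrite Rpow_mult_distr.
    assert ((r ^ m) ^ S n' <= r ^ m).
    { apply pow_le_self; [split; [apply pow_le; lra| apply pow_le_1; lra]|lia]. }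
    pose proof (pow_le (rho a z q) (S n') ltac:(lra)).
    assert (0 <= (r ^ m) ^ S n') by (apply pow_le, pow_le; lra).
    assert (rho a z q ^ S n' * (r ^ m) ^ S n' <= rho a z q ^ S n' * r ^ m) by (apply Rmult_le_compat_l; lra).
    nra. }
  pose proof (Cmod_ge_0 (A (a * q ^ m) (k * q ^ m) z q (S n'))).
  pose proof (Cmod_ge_0 (1 - q * k * q ^ (m + n') * q ^ S n')%C).
  apply Rle_trans with ((1 + Cmod k) * (K * r ^ m * rho a z q ^ S n') / (c3 * (1 - r))).
  2: { right. field. lra. }
  apply div_le_bound.
  - split. apply Rmult_le_pos; auto. apply Rmult_le_compat; auto.
  - split. apply Rmult_lt_0_compat; lra. apply Rmult_le_compat; lra.
Qed.

Lemma le_mult5 (x1 x2 x3 x4 x5 b1 b2 b3 b4 b5 : R) :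
  0 <= x1 <= b1 -> 0 <= x2 <= b2 -> 0 <= x3 <= b3 -> 0 <= x4 <= b4 -> 0 <= x5 <= b5 ->
  x1 * x2 * x3 * x4 * x5 <= b1 * b2 * b3 * b4 * b5.
Proof.
  intros. apply Rmult_le_compat; try lra.
  repeat apply Rmult_le_pos; lra. apply le_mult4; auto.
Qed.

Lemma ge_mult5 (x1 x2 x3 x4 x5 b1 b2 b3 b4 b5 : R) :
  0 < b1 <= x1 -> 0 < b2 <= x2 -> 0 < b3 <= x3 -> 0 < b4 <= x4 -> 0 < b5 <= x5 ->
  0 < b1 * b2 * b3 * b4 * b5 <= x1 * x2 * x3 * x4 * x5.
Proof.
  intros. split. repeat apply Rmult_lt_0_compat; lra.
  apply le_mult5; lra.
Qed.

Lemma Cmod_sub_le (u v : C) : Cmod (u - v)%C <= Cmod u + Cmod v.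
Proof. apply Cmod_tri3. Qed.

Lemma R_lim a k z q (H : Cond a k z q) :
  forall eps, eps > 0 -> exists N, forall n, (n >= N)%nat -> Cmod (Rc a k z q n) < eps.
Proof.
  destruct (A_bound a k z q H) as [K [HK HA]].
  pose proof (rho_bounds a k z q H) as Hrho.
  pose proof (Cond_nz1 _ _ _ _ H) as Hzaq.
  pose proof H as [Ha Hq Hz Hq1 Hqa Hkz Hqa' Hqk].
  destruct (Pbounds _ _ Hq1 Hqk) as [c3 [Hc3 [Hc3' _]]].
  destruct (Pbounds _ _ Hq1 Hqa') as [c2 [Hc2 [Hc2' _]]].
  destruct (Pbounds _ _ Hq1 Hkz) as [c1 [Hc1 [Hc1' _]]].
  pose proof (Cmod_ge_0 q) as Hr0. pose proof (Cmod_ge_0 k) as Hk0.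
  pose proof (Cmod_ge_0 a) as Ha0. pose proof (Cmod_ge_0 z) as Hz0.
  pose proof (proj1 (Cmod_gt_0 z) Hz) as Hzp. pose proof (proj1 (Cmod_gt_0 _) Hzaq) as Hzaqp.
  set (r := Cmod q) in *.
  set (Nb := r * (Cmod z + 1) * (Cmod a + Cmod k) * (Cmod z + Cmod a * Cmod k * r * r)).
  set (Db := Cmod z * Cmod (z - a * q)%C * c3 * c2 * c1).
  assert (0 <= Cmod a * Cmod k * r * r) by (repeat apply Rmult_le_pos; lra).
  assert (HNb : 0 <= Nb) by (unfold Nb; repeat apply Rmult_le_pos; lra).
  assert (HDb : 0 < Db) by (unfold Db; repeat apply Rmult_lt_0_compat; lra).
  assert (Hb : forall n, Cmod (Rc a k z q n) <= K * Nb / Db * rho a z q ^ n).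
  { intros n. unfold Rc.
    assert (r ^ n <= 1) by (apply pow_le_1; lra). pose proof (pow_le r n Hr0).
    replace (k * q * q ^ n)%C with (q * k * q ^ n)%C by ring.
    replace (a * q * q ^ n)%C with (q * a * q ^ n)%C by ring.
    replace (q * k * q ^ n / z)%C with (q * k / z * q ^ n)%C by (field; auto).
    specialize (Hc1' n). specialize (Hc2' n). specialize (Hc3' n).
    assert (N1 : forall c w, 0 < c -> c <= Cmod w -> w <> 0%C).
    { intros c w Hc Hw E. rewrite E, Cmod_0 in Hw. lra. }
    rewrite Cmod_div.
    2: { repeat apply Cmult_neq_0; auto; eapply N1; eauto. }
    rewrite !Cmod_mult.
    specialize (HA 0%nat n). simpl in HA. rewrite !Cmult_1_r, Rmult_1_r in HA.
    pose proof (Cmod_ge_0 (A a k z q n)).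
    apply Rle_trans with ((K * rho a z q ^ n) * r * (Cmod z + 1) * (Cmod a + Cmod k) * (Cmod z + Cmod a * Cmod k * r * r) / Db).
    2: { right. unfold Nb. field. lra. }
    apply div_le_bound.
    - rewrite <- !Rmult_assoc. split. repeat apply Rmult_le_pos; apply Cmod_ge_0.
      apply le_mult5.
      + split; auto.
      + split; [apply Cmod_ge_0| unfold r; lra].
      + split; [apply Cmod_ge_0|]. eapply Rle_trans; [apply Cmod_sub_le|].
        rewrite Cmod_mult, Cmod_pow, Cmod_1. fold r. nra.
      + split; [apply Cmod_ge_0|]. eapply Rle_trans; [apply Cmod_sub_le|].
        rewrite Cmod_mult, Cmod_pow. fold r. nra.
      + split; [apply Cmod_ge_0|]. eapply Rle_trans; [apply Cmod_sub_le|].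
        rewrite !Cmod_mult, Cmod_pow. fold r.
        assert (0 <= Cmod a * Cmod k * r * r) by (repeat apply Rmult_le_pos; lra).
        nra.
    - apply ge_mult5; split; auto; lra. }
  intros eps He.
  assert (HC : 0 <= K * Nb / Db) by (apply Rdiv_le_0_compat; [apply Rmult_le_pos|]; lra).
  destruct (pow_tends0 (rho a z q) Hrho (eps / (K * Nb / Db + 1))) as [N HN].
  { apply Rdiv_lt_0_compat; lra. }
  exists N. intros n Hn. eapply Rle_lt_trans; [apply Hb|].
  specialize (HN n Hn). pose proof (pow_le (rho a z q) n ltac:(lra)).
  apply Rmult_lt_compat_r with (r := K * Nb / Db + 1) in HN; [|lra].
  unfold Rdiv at 2 in HN. rewrite Rmult_assoc, Rinv_l in HN by lra.
  set (C' := K * Nb / Db) in *. nra.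
Qed.

Close Scope C_scope.
Open Scope R_scope.

Lemma Cond_pow a k z q (H : Cond a k z q) : forall m, Cond (a * q ^ m) (k * q ^ m) z q.
Proof.
  induction m as [|m IH].
  - simpl. rewrite !Cmult_1_r. auto.
  - replace (a * q ^ S m)%C with (a * q ^ m * q)%C by (simpl; ring).
    replace (k * q ^ S m)%C with (k * q ^ m * q)%C by (simpl; ring).
    apply Cond_shift; auto.
Qed.

Lemma Cmod_sum6 (x1 x2 x3 x4 x5 x6 : C) :
  Cmod (x1 + x2 + x3 + x4 + x5 + x6)%C <= Cmod x1 + Cmod x2 + Cmod x3 + Cmod x4 + Cmod x5 + Cmod x6.
Proof.
  repeat (eapply Rle_trans; [apply Cmod_triangle|]; apply Rplus_le_compat_r).
  apply Rle_refl.
Qed.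

Lemma step_eq a k z q (H1 : Cond a k z q) (H2 : Cond k a z q) L1 L2 L3 L4 :
  cvC (t a k z q) L1 -> cvC (t k a z q) L2 -> cvC (t (a * q) (k * q) z q) L3 ->
  cvC (t (k * q) (a * q) z q) L4 -> (L1 + L2)%C = (L3 + L4)%C.
Proof.
  intros C1 C2 C3 C4. apply Ceq_minus. apply zero_of_small. intros eps He.
  destruct (C1 (eps/6)) as [N1 HN1]; [lra|]. destruct (C2 (eps/6)) as [N2 HN2]; [lra|].
  destruct (C3 (eps/6)) as [N3 HN3]; [lra|]. destruct (C4 (eps/6)) as [N4 HN4]; [lra|].
  destruct (R_lim a k z q H1 (eps/6)) as [N5 HN5]; [lra|].
  destruct (R_lim k a z q H2 (eps/6)) as [N6 HN6]; [lra|].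
  set (N := max N1 (max N2 (max N3 (max N4 (max N5 N6))))).
  specialize (HN1 N ltac:(lia)). specialize (HN2 N ltac:(lia)). specialize (HN3 N ltac:(lia)).
  specialize (HN4 N ltac:(lia)). specialize (HN5 N ltac:(lia)). specialize (HN6 N ltac:(lia)).
  pose proof (cert a k z q H1 N) as E1. pose proof (cert k a z q H2 N) as E2.
  pose proof (R0_antisym a k z q H1 H2) as E0.
  replace (L1 + L2 - (L3 + L4))%C with
    (- (psumC (t a k z q) N - L1) + - (psumC (t k a z q) N - L2)
     + (psumC (t (a * q) (k * q) z q) N - L3) + (psumC (t (k * q) (a * q) z q) N - L4)
     + Rc a k z q N + Rc k a z q N)%C.
  2: { apply Ceq_minus in E0. 
       replace (Rc a k z q N) with (psumC (t a k z q) N - psumC (t (a * q) (k * q) z q) N + Rc a k z q 0)%C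
         by (rewrite E1; ring).
       replace (Rc k a z q N) with (psumC (t k a z q) N - psumC (t (k * q) (a * q) z q) N + Rc k a z q 0)%C
         by (rewrite E2; ring).
       replace (Rc k a z q 0) with (- Rc a k z q 0)%C.
       ring. apply Ceq_minus in E0. 
       replace (Rc k a z q 0) with (Rc a k z q 0 + Rc k a z q 0 - Rc a k z q 0)%C by ring.
       rewrite E0. ring. }
  eapply Rle_lt_trans; [apply Cmod_sum6|]. rewrite !Cmod_opp. lra.
Qed.

Lemma core_C a k z q (H1 : Cond a k z q) (H2 : Cond k a z q) :
  exists L, cvC (t a k z q) L /\ cvC (t k a z q) (- L)%C.
Proof.
  destruct (t_bound a k z q H1) as [B1 [HB1 Ht1]].
  destruct (t_bound k a z q H2) as [B2 [HB2 Ht2]].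
  pose proof (rho_bounds a k z q H1) as Hr1. pose proof (rho_bounds k a z q H2) as Hr2.
  pose proof (c_q1 _ _ _ _ H1) as Hq1. pose proof (Cmod_ge_0 q) as Hq0.
  set (r := Cmod q) in *. set (rho1 := rho a z q) in *. set (rho2 := rho k z q) in *.
  assert (Ex1 : forall m, exists L, cvC (t (a * q ^ m) (k * q ^ m) z q) L /\
             Cmod L <= B1 * r ^ m * rho1 / (1 - rho1)).
  { intros m. apply geom_cv; auto. apply Rmult_le_pos; auto. apply pow_le; auto. }
  assert (Ex2 : forall m, exists L, cvC (t (k * q ^ m) (a * q ^ m) z q) L /\
             Cmod L <= B2 * r ^ m * rho2 / (1 - rho2)).
  { intros m. apply geom_cv; auto. apply Rmult_le_pos; auto. apply pow_le; auto. }
  destruct (Ex1 0%nat) as [L1 [HL1 _]]. destruct (Ex2 0%nat) as [L2 [HL2 _]].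
  simpl in HL1, HL2. rewrite !Cmult_1_r in HL1, HL2.
  assert (Claim : forall m Lm Lm', cvC (t (a * q ^ m) (k * q ^ m) z q) Lm ->
     cvC (t (k * q ^ m) (a * q ^ m) z q) Lm' -> (L1 + L2)%C = (Lm + Lm')%C).
  { induction m as [|m IH]; intros Lm Lm' Hm Hm'.
    - simpl in Hm, Hm'. rewrite !Cmult_1_r in Hm, Hm'.
      rewrite (cvC_unique _ _ _ HL1 Hm), (cvC_unique _ _ _ HL2 Hm'). reflexivity.
    - destruct (Ex1 m) as [M1 [HM1 _]]. destruct (Ex2 m) as [M2 [HM2 _]].
      rewrite (IH M1 M2 HM1 HM2).
      replace (a * q ^ S m)%C with (a * q ^ m * q)%C in Hm, Hm' by (simpl; ring).
      replace (k * q ^ S m)%C with (k * q ^ m * q)%C in Hm, Hm' by (simpl; ring).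
      apply step_eq with (a := (a * q ^ m)%C) (k := (k * q ^ m)%C) (z := z) (q := q); auto.
      + apply Cond_pow; auto.
      + apply Cond_pow; auto. }
  exists L1. split; auto.
  assert (Hsum : (L1 + L2)%C = 0%C).
  { apply zero_of_small. intros eps He.
    set (D := B1 * rho1 / (1 - rho1) + B2 * rho2 / (1 - rho2)).
    assert (HD : 0 <= D).
    { unfold D. apply Rplus_le_le_0_compat; apply Rdiv_le_0_compat; try apply Rmult_le_pos; lra. }
    destruct (pow_tends0 r ltac:(lra) (eps / (D + 1))) as [m Hm]; [apply Rdiv_lt_0_compat; lra|].
    specialize (Hm m (le_n m)).
    destruct (Ex1 m) as [M1 [HM1 HB1m]]. destruct (Ex2 m) as [M2 [HM2 HB2m]].
    rewrite (Claim m M1 M2 HM1 HM2).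
    eapply Rle_lt_trans; [apply Cmod_triangle|].
    assert (Cmod M1 + Cmod M2 <= D * r ^ m).
    { unfold D. replace (B1 * r ^ m * rho1 / (1 - rho1)) with (B1 * rho1 / (1 - rho1) * r ^ m) in HB1m by (field; lra).
      replace (B2 * r ^ m * rho2 / (1 - rho2)) with (B2 * rho2 / (1 - rho2) * r ^ m) in HB2m by (field; lra).
      lra. }
    pose proof (pow_le r m Hq0).
    apply Rmult_lt_compat_r with (r := D + 1) in Hm; [|lra].
    unfold Rdiv in Hm. rewrite Rmult_assoc, Rinv_l in Hm by lra. nra. }
  replace (- L1)%C with L2; auto.
  replace L2 with (L1 + L2 - L1)%C by ring. rewrite Hsum. ring.
Qed.

Import Defs.
Open Scope R_scope.

Definition phi (x : Cplx) : C := (Re x, Im x).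
Definition psi (c : C) : Cplx := mkC (fst c) (snd c).

Lemma phi_psi c : phi (psi c) = c.
Proof. destruct c; reflexivity. Qed.

Lemma phi_inj x y : phi x = phi y -> x = y.
Proof. destruct x, y; unfold phi; simpl; intros H; inversion H; reflexivity. Qed.

Lemma phi_add x y : phi (Cadd x y) = (phi x + phi y)%C.
Proof. reflexivity. Qed.
Lemma phi_opp x : phi (Copp x) = (- phi x)%C.
Proof. reflexivity. Qed.
Lemma phi_sub x y : phi (Csub x y) = (phi x - phi y)%C.
Proof. reflexivity. Qed.
Lemma phi_mul x y : phi (Cmul x y) = (phi x * phi y)%C.
Proof. reflexivity. Qed.
Lemma phi_C0 : phi C0 = RtoC 0.
Proof. reflexivity. Qed.
Lemma phi_C1 : phi C1 = RtoC 1.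
Proof. reflexivity. Qed.
Lemma phi_inv x : phi (Cinv x) = (/ phi x)%C.
Proof. unfold phi, Cinv, Complex.Cinv; simpl. rewrite !Rmult_1_r. reflexivity. Qed.
Lemma phi_div x y : phi (Cdiv x y) = (phi x / phi y)%C.
Proof. unfold Defs.Cdiv. rewrite phi_mul, phi_inv. reflexivity. Qed.
Lemma phi_pow x n : phi (Cpow x n) = (phi x ^ n)%C.
Proof. induction n; simpl. reflexivity. rewrite phi_mul, IHn. reflexivity. Qed.
Lemma phi_qpoch x q n : phi (qpoch x q n) = P (phi x) (phi q) n.
Proof. induction n; simpl. reflexivity. rewrite phi_mul, phi_sub, phi_C1, phi_mul, phi_pow, IHn. reflexivity. Qed.
Lemma Cnorm_phi x : Cnorm x = Cmod (phi x).
Proof. unfold Cnorm, Cmod, phi; simpl. rewrite !Rmult_1_r. reflexivity. Qed.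
Lemma phi_psum u N : phi (psum1 u N) = psumC (fun n => phi (u n)) N.
Proof. induction N; simpl. reflexivity. rewrite phi_add, IHN. reflexivity. Qed.
Lemma phi_nz x : x <> C0 -> phi x <> RtoC 0.
Proof. intros H E. apply H. apply phi_inj. rewrite E. reflexivity. Qed.

Hint Rewrite phi_add phi_opp phi_sub phi_mul phi_C0 phi_C1 phi_div phi_pow phi_qpoch : phidb.

Lemma psumC_ext u v N : (forall n, (1 <= n)%nat -> u n = v n) -> psumC u N = psumC v N.
Proof. intros H. induction N; simpl. reflexivity. rewrite IHN, H by lia. reflexivity. Qed.

Lemma cv_translate (u : nat -> Cplx) L v :
  (forall n, (1 <= n)%nat -> phi (u n) = v n) -> cvC v (phi L) -> series1_cv u L.
Proof.
  intros Huv H eps He. destruct (H eps He) as [N HN]. exists N. intros M HM.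
  rewrite Cnorm_phi, phi_sub, phi_psum. rewrite (psumC_ext _ v M Huv). apply HN; auto.
Qed.

Open Scope C_scope.

Lemma qs_lemma s q n :
  P (q * s) q n * P (- (q * s)) q n * (1 - s * s) = P s q n * P (- s) q n * (1 - s * s * q ^ n * q ^ n).
Proof.
  induction n as [|n IH]; simpl. ring.
  replace (P (q * s) q n * (1 - q * s * q ^ n) * (P (- (q * s)) q n * (1 - - (q * s) * q ^ n)) * (1 - s * s))
    with ((P (q * s) q n * P (- (q * s)) q n * (1 - s * s)) * ((1 - q * s * q ^ n) * (1 - - (q * s) * q ^ n))) by ring.
  rewrite IH. ring.
Qed.

Lemma k_lemma K q n : P K q n * (1 - K * q ^ n) = (1 - K) * P (q * K) q n.
Proof.
  induction n as [|n IH]; simpl. ring.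
  replace (P K q n * (1 - K * q ^ n) * (1 - K * (q * q ^ n))) with ((P K q n * (1 - K * q ^ n)) * (1 - K * (q * q ^ n))) by ring.
  rewrite IH. ring.
Qed.

Lemma P_first x q n : (1 <= n)%nat -> P x q n <> 0 -> 1 - x <> 0.
Proof.
  intros Hn H. replace n with (1 + (n - 1))%nat in H by lia. rewrite P_add in H.
  apply Cmult_neq_0_inv in H as [H _]. simpl in H. intro E; apply H. rewrite <- E. ring.
Qed.

Lemma P_last x q n : P x q (S n) <> 0 -> 1 - x * q ^ n <> 0.
Proof. simpl. intros H. apply Cmult_neq_0_inv in H as [_ H]. auto. Qed.

Lemma f_term_t a k z q sk n (Hsk : Cmul sk sk = k) (Hd : f_denoms_ok a k z q sk) (Hn : (1 <= n)%nat) :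
  phi (f_term a k z q sk n) = t (phi a) (phi k) (phi z) (phi q) n.
Proof.
  subst k.
  destruct Hd as [Ha [Hz Hden]]. specialize (Hden n Hn).
  apply phi_nz in Ha, Hz, Hden.
  unfold f_term, f_num, f_den in *.
  autorewrite with phidb in *.
  set (s := phi sk) in *. set (A' := phi a) in *. set (Z := phi z) in *. set (Q := phi q) in *.
  apply Cmult_neq_0_inv in Hden as [Hden D6].
  apply Cmult_neq_0_inv in Hden as [Hden D5].
  apply Cmult_neq_0_inv in Hden as [Hden D4].
  apply Cmult_neq_0_inv in Hden as [Hden D3].
  apply Cmult_neq_0_inv in Hden as [D1 D2].
  pose proof (P_first _ _ _ Hn D1) as F1. pose proof (P_first _ _ _ Hn D2) as F2.
  assert (F3 : 1 - s * s <> 0).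
  { replace (1 - s * s) with ((1 - s) * (1 - - s)) by ring. apply Cmult_neq_0; auto. }
  assert (F4 : 1 - s * s * Q ^ n <> 0).
  { destruct n as [|n']; [lia|]. pose proof (P_last _ _ _ D3) as G.
    replace (s * s * Q ^ S n') with (Q * (s * s) * Q ^ n') by (simpl; ring). auto. }
  assert (E1 : P (Q * s) Q n * P (- (Q * s)) Q n = P s Q n * P (- s) Q n * (1 - s * s * Q ^ n * Q ^ n) / (1 - s * s)).
  { rewrite <- qs_lemma. field. auto. }
  assert (E2 : P (s * s) Q n = (1 - s * s) * P (Q * (s * s)) Q n / (1 - s * s * Q ^ n)).
  { rewrite <- k_lemma. field. auto. }
  rewrite E1, E2. unfold t, A.
  field. repeat split; auto.
Qed.

Lemma cond_of a k z q sk : phi q <> 0 -> Cnorm q < 1 -> Cnorm (Cmul q a) < Cnorm z ->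
  f_denoms_ok a k z q sk -> Cond (phi a) (phi k) (phi z) (phi q).
Proof.
  intros Hq Hq1 Hqa Hd. destruct Hd as [Ha [Hz Hden]].
  assert (Hd' : forall i, P (phi sk) (phi q) (S i) * P (- phi sk) (phi q) (S i) *
     P (phi q * phi k) (phi q) (S i) * P (phi q * phi k / phi z) (phi q) (S i) *
     P (phi q * phi a) (phi q) (S i) * (1 - phi q ^ S i) <> 0).
  { intros i. specialize (Hden (S i) ltac:(lia)). apply phi_nz in Hden.
    unfold f_den in Hden. autorewrite with phidb in Hden. exact Hden. }
  rewrite !Cnorm_phi, phi_mul in *.
  constructor; auto using phi_nz.
  - intros i. specialize (Hd' i).
    apply Cmult_neq_0_inv in Hd' as [Hd' _]. apply Cmult_neq_0_inv in Hd' as [Hd' _].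
    apply Cmult_neq_0_inv in Hd' as [_ Hd']. apply P_last; auto.
  - intros i. specialize (Hd' i).
    apply Cmult_neq_0_inv in Hd' as [Hd' _]. apply Cmult_neq_0_inv in Hd' as [_ Hd'].
    apply P_last; auto.
  - intros i. specialize (Hd' i).
    apply Cmult_neq_0_inv in Hd' as [Hd' _]. apply Cmult_neq_0_inv in Hd' as [Hd' _].
    apply Cmult_neq_0_inv in Hd' as [Hd' _].
    apply Cmult_neq_0_inv in Hd' as [_ Hd']. apply P_last; auto.
Qed.

Lemma t_q0 a k z n : (1 <= n)%nat -> t a k z (RtoC 0) n = RtoC 0.
Proof.
  intros Hn. destruct n as [|n']; [lia|]. unfold t, A.
  replace (RtoC 0 * a / z) with (RtoC 0) by (unfold Complex.Cdiv; ring).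
  rewrite Cpow_S. unfold Complex.Cdiv. ring.
Qed.

Lemma cvC_zero u : (forall n, (1 <= n)%nat -> u n = RtoC 0) -> cvC u (RtoC 0).
Proof.
  intros H eps He. exists 0%nat. intros M _.
  rewrite (psumC_ext u (fun _ => RtoC 0) M H).
  assert (psumC (fun _ => RtoC 0) M = RtoC 0) by (induction M; simpl; [reflexivity| rewrite IHM; ring]).
  rewrite H0. replace (RtoC 0 - RtoC 0) with (RtoC 0) by ring. rewrite Cmod_0. lra.
Qed.

Close Scope C_scope.

Theorem lemma2p2 (a k z q sa sk : Cplx)
  (Hsa : Cmul sa sa = a) (Hsk : Cmul sk sk = k)
  (Hq : Cnorm q < 1)
  (Hqa : Cnorm (Cmul q a) < Cnorm z) (Hqk : Cnorm (Cmul q k) < Cnorm z)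
  (Hd1 : f_denoms_ok a k z q sk) (Hd2 : f_denoms_ok k a z q sa) :
  exists L : Cplx,
    series1_cv (f_term a k z q sk) L /\
    series1_cv (f_term k a z q sa) (Copp L).
Proof.
  destruct (Classical_Prop.classic (phi q = RtoC 0)) as [Hq0|Hq0].
  - exists C0. split.
    + apply (cv_translate _ _ (t (phi a) (phi k) (phi z) (phi q))).
      * intros n Hn. apply f_term_t; auto.
      * rewrite phi_C0. apply cvC_zero. intros n Hn. rewrite Hq0. apply t_q0; auto.
    + apply (cv_translate _ _ (t (phi k) (phi a) (phi z) (phi q))).
      * intros n Hn. apply f_term_t; auto.
      * replace (phi (Copp C0)) with (RtoC 0) by (apply injective_projections; simpl; ring).
        apply cvC_zero. intros n Hn. rewrite Hq0. apply t_q0; auto.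
  - pose proof (cond_of a k z q sk Hq0 Hq Hqa Hd1) as C1'.
    pose proof (cond_of k a z q sa Hq0 Hq Hqk Hd2) as C2'.
    destruct (core_C _ _ _ _ C1' C2') as [L0 [HL1 HL2]].
    exists (psi L0). split.
    + apply (cv_translate _ _ (t (phi a) (phi k) (phi z) (phi q))).
      * intros n Hn. apply f_term_t; auto.
      * rewrite phi_psi. auto.
    + apply (cv_translate _ _ (t (phi k) (phi a) (phi z) (phi q))).
      * intros n Hn. apply f_term_t; auto.
      * rewrite phi_opp, phi_psi. auto.
Qed.
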